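(* Assume Assumption (A1) below holds for the chosen bridge extension. Then: (i) For all $0\le s<t\le 1$, every $\ell\in\{1,\dots,L\}$ and every $\mathbf x_t\in\mathsf X$ with $p_t(\mathbf x_t)>0$, $$p^\ell_{s|t}(\cdot\mid \mathbf x_t)=q^\ell_{s|0,t}\big(\cdot\mid \hat{\mathbf x}^{\mathrm{loo}}_0(\mathbf x_t,t)^\ell,\ \mathbf x_t^\ell\big).$$ (ii) Consequently, for every time grid, the predictor $d^\star(\mathbf x,t):=\hat{\mathbf x}^{\mathrm{loo}}_0(\mathbf x,t)$ minimizes $J$: $J(d^\star)\le J(d)$ for every predictor $d$. (iii) (Uniqueness for UDM.) Consider the uniform case $\pi^\ell=\mathbf 1/K$ with the canonical extension given below. Assume $\alpha$ is strictly decreasing with $\alpha_0=1$ and $\alpha_t\in(0,1)$ for $t\in(0,1]$. Let $0<s<t\le 1$ and let $e_k\in\mathsf V$. Then the map $\nu\mapsto q^\ell_{s|0,t}(\cdot\mid\nu,e_k)$ is injective on $\Delta_K$. In particular, if $\nu\in\Delta_K$ satisfies $q^\ell_{s|0,t}(\cdot\mid \nu,\mathbf x_t^\ell)=p^\ell_{s|t}(\cdot\mid\mathbf x_t)$, then $\nu=\hat{\mathbf x}^{\mathrm{loo}}_0(\mathbf x_t,t)^\ell$. Hence the minimizer in (ii) is unique (at every $\mathbf x_t$ and for every term with $s_i>0$).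
   Context: **Setup.** - Let $K\ge2$, $L\ge1$ and $\mathsf V=\{1,\dots,K\}$. Tokens are identified with the standard basis vectors $e_1,\dots,e_K$ of $\mathbb R^K$. - $\Delta_K$ is the probability simplex in $\mathbb R^K$, and $\mathbf 1$ is the all-ones vector. For $\pi\in\Delta_K$ and a token $x$, $\mathrm{Cat}(x;\pi):=\langle x,\pi\rangle$. - $\mathsf X=\mathsf V^L$. For $\mathbf x\in\mathsf X$, $\mathbf x^\ell$ denotes its $\ell$-th token and $\mathbf x^{-\ell}\in\mathsf V^{L-1}$ denotes the remaining tokens. - $p_0$ is a probability distribution on $\mathsf X$. - The noise schedule $\alpha:[0,1]\to[0,1]$ is nonincreasing with $\alpha_0=1$, and $\alpha_{t|s}:=\alpha_t/\alpha_s$. - For each position $\ell$ fix $\pi^\ell\in\Delta_K$. The forward token kernels are $q^\ell_{t|s}(x_t\mid x_s)=\mathrm{Cat}(x_t;\alpha_{t|s}x_s+(1-\alpha_{t|s})\pi^\ell)$ for $0\le s<t\le1$, and $q_{t|s}(\mathbf x_t\mid\mathbf x_s)=\prod_\ell q^\ell_{t|s}(\mathbf x_t^\ell\mid\mathbf x_s^\ell)$. - The same formula $q^\ell_{t|0}(x\mid\nu)=\langle x,\alpha_t\nu+(1-\alpha_t)\pi^\ell\rangle$ is used for $\nu\in\Delta_K$. - $(X_t)_{t\in[0,1]}$ is the Markov process with $X_0\sim p_0$ and these transitions. $p_t$ is the law of $X_t$, and $p_t(\mathbf x^{-\ell})$ denotes the marginal of $X_t^{-\ell}$. - ''UDM''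 means $\pi^\ell=\mathbf 1/K$ for all $\ell$. **Posteriors.** - Denoiser: $p^\ell_{0|t}(x\mid\mathbf x_t):=\mathbb P(X_0^\ell=x\mid X_t=\mathbf x_t)$. - Leave-one-out (LOO) posterior: $p^{\mathrm{loo},\ell}_{0|t}(x\mid\mathbf x_t^{-\ell}):=\mathbb P(X_0^\ell=x\mid X_t^{-\ell}=\mathbf x_t^{-\ell})$. Equivalently it is proportional to $\sum_{\mathbf x_0^{-\ell}}p_0(\mathbf x_0)\prod_{j\ne\ell}q^j_{t|0}(\mathbf x_t^j\mid\mathbf x_0^j)$ with $\mathbf x_0^\ell=x$. - Its mean vector is $\hat{\mathbf x}^{\mathrm{loo}}_0(\mathbf x_t,t)^\ell:=\sum_x p^{\mathrm{loo},\ell}_{0|t}(x\mid\mathbf x_t^{-\ell})\,x\in\Delta_K$. - Reverse token marginal: $p^\ell_{s|t}(x\mid\mathbf x_t):=\mathbb P(X^\ell_s=x\mid X_t=\mathbf x_t)$. **Bridge extension.** - For $0\le s<t$, a bridge extension is a map $(\nu,x_t)\mapsto q^\ell_{s|0,t}(\cdot\mid\nu,x_t)\in\Delta_K$ defined for $\nu\in\Delta_K$ and $x_t\in\mathsf V$. - For one-hot $\nu=x_0$ with $q^\ell_{t|0}(x_t\mid x_0)>0$ it equals $q^\ell_{t|s}(x_t\mid x_s)q^\ell_{s|0}(x_s\mid x_0)/q^\ell_{t|0}(x_t\mid x_0)$. - Assumption (A1): for all $x_s,x_t\in\mathsf V$ and all $\nu\in\Delta_K$ with $q^\ell_{t|0}(x_t\mid\nu)>0$,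 $$q^\ell_{s|0,t}(x_s\mid\nu,x_t)=\frac{q^\ell_{t|s}(x_t\mid x_s)\,q^\ell_{s|0}(x_s\mid\nu)}{q^\ell_{t|0}(x_t\mid\nu)}.$$ - In the UDM case the canonical extension is: for $x_t=e_k$, $$q^\ell_{s|0,t}(\cdot\mid\nu,e_k)=\mathrm{Cat}\Big(\cdot;\ \frac{K\alpha_t\nu_k e_k+(\alpha_{t|s}-\alpha_t)e_k+(\alpha_s-\alpha_t)\nu+D_{s,t}\mathbf 1/K}{K\alpha_t\nu_k+1-\alpha_t}\Big),$$ with $\nu_k=\langle e_k,\nu\rangle$ and $D_{s,t}=(1-\alpha_{t|s})(1-\alpha_s)$. This extension satisfies (A1). **Objective.** - Fix a grid $0=t_0<t_1<\dots<t_n=1$ and set $s_i=t_{i-1}$. - A predictor is a function $d:\mathsf X\times[0,1]\to\Delta_K^L$. - The objective is $$J(d):=\sum_{i=1}^n\sum_{\ell=1}^L\mathbb E\Big[\mathrm{KL}\Big(p^\ell_{s_i|t_i}(\cdot\mid X_{t_i})\ \Big\|\ q^\ell_{s_i|0,t_i}\big(\cdot\mid d(X_{t_i},t_i)^\ell,X^\ell_{t_i}\big)\Big)\Big].$$ *)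

(* Defs.v *)
From HB Require Import structures.
From mathcomp Require Import all_boot all_order all_algebra.
From mathcomp Require Import all_classical all_reals all_analysis.
Set Implicit Arguments. Unset Strict Implicit. Unset Printing Implicit Defensive.
Import Order.TTheory GRing.Theory Num.Theory.
Local Open Scope ring_scope.

Section Defs.
Variable R : realType.

(* sequences x in X = V^L, with V = 'I_K (token k <-> basis vector e_k) *)
Definition seqX (K L : nat) := {ffun 'I_L -> 'I_K}.

Definition simplex (K : nat) (nu : 'I_K -> R) : Prop :=
  (forall k, 0 <= nu k) /\ \sum_(k < K) nu k = 1.

Definition is_pmf (T : finType) (p : T -> R) : Prop :=
  (forall x, 0 <= p x) /\ \sum_(x : T) p x = 1.

Definition schedule (alpha : R -> R) : Prop :=
  alpha 0 = 1 /\
  (forall t, 0 <= t -> t <= 1 -> 0 <= alpha t <= 1) /\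
  (forall s t, 0 <= s -> s <= t -> t <= 1 -> alpha t <= alpha s).

Definition onehot (K : nat) (k : 'I_K) : 'I_K -> R := fun j => (j == k)%:R.

(* Cat(x ; a nu + (1-a) pi) *)
Definition qcat (K : nat) (pil : 'I_K -> R) (a : R) (nu : 'I_K -> R) (x : 'I_K) : R :=
  a * nu x + (1 - a) * pil x.

Definition qseq (K L : nat) (alpha : R -> R) (pi : 'I_L -> 'I_K -> R)
  (s t : R) (x y : seqX K L) : R :=
  \prod_(l < L) qcat (pi l) (alpha t / alpha s) (onehot (x l)) (y l).

Definition marg (K L : nat) (p0 : seqX K L -> R) (alpha : R -> R)
  (pi : 'I_L -> 'I_K -> R) (t : R) (x : seqX K L) : R :=
  \sum_(x0 : seqX K L) p0 x0 * qseq alpha pi 0 t x0 x.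

(* P(X_s = xs, X_t = xt), from the Markov chain X_0 -> X_s -> X_t *)
Definition joint (K L : nat) (p0 : seqX K L -> R) (alpha : R -> R)
  (pi : 'I_L -> 'I_K -> R) (s t : R) (xs xt : seqX K L) : R :=
  \sum_(x0 : seqX K L) p0 x0 * qseq alpha pi 0 s x0 xs * qseq alpha pi s t xs xt.

(* reverse token marginal p^l_{s|t}(x | xt) = P(X_s^l = x | X_t = xt) *)
Definition rev_tok (K L : nat) (p0 : seqX K L -> R) (alpha : R -> R)
  (pi : 'I_L -> 'I_K -> R) (s t : R) (l : 'I_L) (xt : seqX K L) (x : 'I_K) : R :=
  (\sum_(xs : seqX K L | xs l == x) joint p0 alpha pi s t xs xt)
  / marg p0 alpha pi t xt.

Definition agree_off (K L : nat) (l : 'I_L) (xt y : seqX K L) : bool :=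
  [forall j : 'I_L, (j != l) ==> (y j == xt j)].

(* LOO posterior P(X_0^l = x | X_t^{-l} = xt^{-l}) *)
Definition loo (K L : nat) (p0 : seqX K L -> R) (alpha : R -> R)
  (pi : 'I_L -> 'I_K -> R) (t : R) (l : 'I_L) (xt : seqX K L) (x : 'I_K) : R :=
  (\sum_(x0 : seqX K L | x0 l == x) \sum_(y : seqX K L | agree_off l xt y)
      p0 x0 * qseq alpha pi 0 t x0 y)
  / (\sum_(x0 : seqX K L) \sum_(y : seqX K L | agree_off l xt y)
      p0 x0 * qseq alpha pi 0 t x0 y).

(* mean vector  xhat^loo_0(xt, t)^l = sum_x loo(x) e_x  (k-th coordinate) *)
Definition xhat (K L : nat) (p0 : seqX K L -> R) (alpha : R -> R)
  (pi : 'I_L -> 'I_K -> R) (xt : seqX K L) (t : R) (l : 'I_L) : 'I_K -> R :=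
  fun k => loo p0 alpha pi t l xt k.

(* a bridge extension: bridge l s t nu xt is a vector in R^K (indexed by x_s) *)
Definition bridge_type (K L : nat) :=
  'I_L -> R -> R -> ('I_K -> R) -> 'I_K -> 'I_K -> R.

Definition bridge_simplex (K L : nat) (br : bridge_type K L) : Prop :=
  forall l s t nu xt, 0 <= s -> s < t -> t <= 1 -> simplex nu ->
    simplex (br l s t nu xt).

Definition A1 (K L : nat) (alpha : R -> R) (pi : 'I_L -> 'I_K -> R)
  (br : bridge_type K L) : Prop :=
  forall l s t, 0 <= s -> s < t -> t <= 1 ->
  forall (xs xt : 'I_K) (nu : 'I_K -> R), simplex nu ->
    0 < qcat (pi l) (alpha t) nu xt ->
    br l s t nu xt xs =
      qcat (pi l) (alpha t / alpha s) (onehot xs) xt * qcat (pi l) (alpha s) nu xs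
      / qcat (pi l) (alpha t) nu xt.

Definition udm_bridge (K L : nat) (alpha : R -> R) : bridge_type K L :=
  fun l s t nu xt xs =>
    let ats := alpha t / alpha s in
    let D := (1 - ats) * (1 - alpha s) in
    (K%:R * alpha t * nu xt * (xs == xt)%:R + (ats - alpha t) * (xs == xt)%:R
      + (alpha s - alpha t) * nu xs + D / K%:R)
    / (K%:R * alpha t * nu xt + 1 - alpha t).

Definition KL (K : nat) (p q : 'I_K -> R) : \bar R :=
  (\sum_(x < K) (if p x == 0%R then 0%E
                 else if q x == 0%R then +oo%E
                 else (p x * ln (p x / q x))%:E))%E.

Definition grid (n : nat) (tg : nat -> R) : Prop :=
  tg 0%N = 0 /\ tg n = 1 /\ (forall i, (i < n)%N -> tg i < tg i.+1).

Definition predictor (K L : nat) (d : seqX K L -> R -> 'I_L -> 'I_K -> R) : Prop :=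
  forall x t l, 0 <= t -> t <= 1 -> simplex (d x t l).

(* objective J(d), with s_i = t_{i-1} *)
Definition Jobj (K L : nat) (p0 : seqX K L -> R) (alpha : R -> R)
  (pi : 'I_L -> 'I_K -> R) (br : bridge_type K L) (n : nat) (tg : nat -> R)
  (d : seqX K L -> R -> 'I_L -> 'I_K -> R) : \bar R :=
  (\sum_(1 <= i < n.+1) \sum_(l < L) \sum_(x : seqX K L)
     ((marg p0 alpha pi (tg i) x)%:E *
      KL (rev_tok p0 alpha pi (tg i.-1) (tg i) l x)
         (br l (tg i.-1) (tg i) (d x (tg i) l) (x l))))%E.

End Defs.

(* Main.v *)
Require Import Defs.
From HB Require Import structures.
From mathcomp Require Import all_boot all_order all_algebra.
From mathcomp Require Import all_classical all_reals all_analysis.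
From mathcomp Require Import ring lra.
Import Order.TTheory GRing.Theory Num.Theory.
Set Implicit Arguments. Unset Strict Implicit. Unset Printing Implicit Defensive.
Local Open Scope ring_scope.

Lemma sum_onehot (R : realType) K (x : 'I_K) (f : 'I_K -> R) :
  \sum_k onehot R x k * f k = f x.
Proof.
rewrite (bigD1 x) //= big1 => [|k /negbTE hk]; rewrite /onehot ?hk ?eqxx.
  by rewrite mul1r addr0.
by rewrite mul0r.
Qed.

Lemma simplex_onehot (R : realType) K (x : 'I_K) : simplex (onehot R x).
Proof.
split; first by move=> k; rewrite /onehot ler0n.
by rewrite -[RHS](sum_onehot x (fun _ => 1)); apply: eq_bigr => k _; rewrite mulr1.
Qed.

Lemma qcat_sum (R : realType) K (pi nu : 'I_K -> R) c :
  simplex pi -> simplex nu -> \sum_k qcat pi c nu k = 1.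
Proof.
move=> [_ hp] [_ hn]; rewrite /qcat big_split /= -!mulr_sumr hp hn; ring.
Qed.

Lemma qcat_ge0 (R : realType) K (pi nu : 'I_K -> R) c y :
  simplex pi -> simplex nu -> 0 <= c <= 1 -> 0 <= qcat pi c nu y.
Proof.
move=> [hp _] [hn _] /andP[c0 c1]; rewrite /qcat addr_ge0 // mulr_ge0 //.
by rewrite subr_ge0.
Qed.

Lemma simplex_le1 (R : realType) K (nu : 'I_K -> R) y : simplex nu -> nu y <= 1.
Proof.
move=> [hn s1]; rewrite -s1 (bigD1 y) //= lerDl sumr_ge0 //.
Qed.

Lemma qcat_le1 (R : realType) K (pi nu : 'I_K -> R) c y :
  simplex pi -> simplex nu -> 0 <= c <= 1 -> qcat pi c nu y <= 1.
Proof.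
move=> hp hn /andP[c0 c1]; rewrite /qcat.
have h1 := simplex_le1 y hp; have h2 := simplex_le1 y hn.
have h3 : 0 <= 1 - c by rewrite subr_ge0.
have : c * nu y <= c * 1 by rewrite ler_wpM2l.
have : (1 - c) * pi y <= (1 - c) * 1 by rewrite ler_wpM2l.
lra.
Qed.

Lemma qcat_CK (R : realType) K (pi : 'I_K -> R) b r x z :
  simplex pi ->
  \sum_k qcat pi b (onehot R x) k * qcat pi r (onehot R k) z = qcat pi (b * r) (onehot R x) z.
Proof.
move=> [_ hp]; rewrite /qcat.
under eq_bigr => k _ do rewrite mulrDl -mulrA.
rewrite big_split /= -mulr_sumr sum_onehot.
under eq_bigr => k _ do rewrite -mulrA mulrDr.
rewrite -mulr_sumr big_split /= -mulr_suml hp.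
have -> : \sum_i pi i * (r * onehot R i z) = r * pi z.
  under eq_bigr => i _ do rewrite mulrCA.
  rewrite -mulr_sumr; congr (_ * _); rewrite -[RHS](sum_onehot z pi).
  by apply: eq_bigr => i _; rewrite mulrC /onehot eq_sym.
ring.
Qed.

Lemma sum_ffun_prod (R : realType) K L (P : 'I_L -> 'I_K -> bool) (F : 'I_L -> 'I_K -> R) :
  \sum_(x : seqX K L | [forall j, P j (x j)]) \prod_j F j (x j)
  = \prod_j \sum_(k | P j k) F j k.
Proof.
under [RHS]eq_bigr => j _ do rewrite big_mkcond /=.
rewrite bigA_distr_bigA /= big_mkcond /=.
apply: eq_bigr => x _.
case: (boolP [forall j, P j (x j)]) => h.
  by apply: eq_bigr => j _; rewrite (forallP h j).
move/forallPn: h => [j hj]; rewrite (bigD1 j) //= (negbTE hj) mul0r.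
by [].
Qed.

Lemma sum_qcat_lin (R : realType) K L (pi : 'I_K -> R) c (l : 'I_L) y (F : seqX K L -> R) :
  \sum_(x0 : seqX K L) F x0 * qcat pi c (onehot R (x0 l)) y
  = c * \sum_(x0 : seqX K L | x0 l == y) F x0 + (1 - c) * pi y * \sum_x0 F x0.
Proof.
rewrite /qcat; under eq_bigr => x0 _ do rewrite mulrDr.
rewrite big_split /=; congr (_ + _).
  rewrite mulr_sumr [RHS]big_mkcond /=; apply: eq_bigr => x0 _; rewrite /onehot [y == _]eq_sym.
  by case: (x0 l == y) => /=; ring.
by rewrite big_distrr /=; apply: eq_bigr => x0 _; rewrite mulrC.
Qed.

Definition Pm (R : realType) K L (alpha : R -> R) (pi : 'I_L -> 'I_K -> R) t (l : 'I_L)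
  (xt x0 : seqX K L) : R :=
  \prod_(j | j != l) qcat (pi j) (alpha t) (onehot R (x0 j)) (xt j).

Definition Nw (R : realType) K L (p0 : seqX K L -> R) (alpha : R -> R) (pi : 'I_L -> 'I_K -> R)
  t (l : 'I_L) (xt : seqX K L) (x : 'I_K) : R :=
  \sum_(x0 : seqX K L | x0 l == x) p0 x0 * Pm alpha pi t l xt x0.

Definition Ww (R : realType) K L (p0 : seqX K L -> R) (alpha : R -> R) (pi : 'I_L -> 'I_K -> R)
  t (l : 'I_L) (xt : seqX K L) : R :=
  \sum_(x0 : seqX K L) p0 x0 * Pm alpha pi t l xt x0.

Lemma marg_eq (R : realType) K L (p0 : seqX K L -> R) (alpha : R -> R) (pi : 'I_L -> 'I_K -> R)
  t l xt : alpha 0 = 1 ->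
  marg p0 alpha pi t xt = alpha t * Nw p0 alpha pi t l xt (xt l)
     + (1 - alpha t) * pi l (xt l) * Ww p0 alpha pi t l xt.
Proof.
move=> a0; rewrite /marg /Nw /Ww -sum_qcat_lin; apply: eq_bigr => x0 _.
by rewrite /qseq a0 divr1 (bigD1 l) //= /Pm -mulrA [X in _ * X]mulrC.
Qed.

Lemma loo_num (R : realType) K L (p0 : seqX K L -> R) (alpha : R -> R) (pi : 'I_L -> 'I_K -> R)
  t l xt x : alpha 0 = 1 -> simplex (pi l) ->
  \sum_(x0 : seqX K L | x0 l == x) \sum_(y : seqX K L | agree_off l xt y)
      p0 x0 * qseq alpha pi 0 t x0 y = Nw p0 alpha pi t l xt x.
Proof.
move=> a0 hpl; apply: eq_bigr => x0 _; rewrite -mulr_sumr; congr (_ * _).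
rewrite /qseq a0 divr1 /agree_off.
rewrite (sum_ffun_prod (fun j k => (j != l) ==> (k == xt j))
   (fun j k => qcat (pi j) (alpha t) (onehot R (x0 j)) k)).
rewrite (bigD1 l) //= eqxx /=.
rewrite (qcat_sum _ hpl (simplex_onehot _ _)) mul1r /Pm.
apply: eq_bigr => j hj; rewrite hj /=.
by rewrite (big_pred1_eq _ (xt j) (fun k => qcat (pi j) (alpha t) (onehot R (x0 j)) k)).
Qed.

Lemma loo_den (R : realType) K L (p0 : seqX K L -> R) (alpha : R -> R) (pi : 'I_L -> 'I_K -> R)
  t l xt : alpha 0 = 1 -> simplex (pi l) ->
  \sum_(x0 : seqX K L) \sum_(y : seqX K L | agree_off l xt y)
      p0 x0 * qseq alpha pi 0 t x0 y = Ww p0 alpha pi t l xt.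
Proof.
move=> a0 hpl; rewrite /Ww (partition_big (fun x0 : seqX K L => x0 l) predT) //=.
rewrite [RHS](partition_big (fun x0 : seqX K L => x0 l) predT) //=.
apply: eq_bigr => x _; rewrite (loo_num _ _ _ _ a0 hpl) //.
Qed.


Lemma joint_sum (R : realType) K L (p0 : seqX K L -> R) (alpha : R -> R) (pi : 'I_L -> 'I_K -> R)
  s t l xt x : alpha 0 = 1 -> (forall j, simplex (pi j)) -> alpha s * (alpha t / alpha s) = alpha t ->
  \sum_(xs : seqX K L | xs l == x) joint p0 alpha pi s t xs xt
  = (alpha s * Nw p0 alpha pi t l xt x + (1 - alpha s) * pi l x * Ww p0 alpha pi t l xt)
    * qcat (pi l) (alpha t / alpha s) (onehot R x) (xt l).
Proof.
move=> a0 hpi hr; rewrite /joint exchange_big /=.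
transitivity (\sum_(x0 : seqX K L) (p0 x0 * Pm alpha pi t l xt x0
   * qcat (pi l) (alpha s) (onehot R (x0 l)) x) * qcat (pi l) (alpha t / alpha s) (onehot R x) (xt l)).
  apply: eq_bigr => x0 _.
  under eq_bigr do rewrite -mulrA.
  rewrite -mulr_sumr -!mulrA; congr (_ * _).
  rewrite /qseq a0 divr1.
  under eq_bigr do rewrite -big_split /=.
  have -> : \sum_(xs : seqX K L | xs l == x)
      \prod_j (qcat (pi j) (alpha s) (onehot R (x0 j)) (xs j) *
             qcat (pi j) (alpha t / alpha s) (onehot R (xs j)) (xt j))
    = \sum_(xs : seqX K L | [forall j, (j == l) ==> (xs j == x)])
      \prod_j (qcat (pi j) (alpha s) (onehot R (x0 j)) (xs j) *
             qcat (pi j) (alpha t / alpha s) (onehot R (xs j)) (xt j)).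
    apply: eq_bigl => xs; apply/idP/forallP.
      by move/eqP=> h j; apply/implyP => /eqP ->; rewrite h.
    by move=> h; exact: (implyP (h l) (eqxx l)).
  rewrite (sum_ffun_prod (fun j k => (j == l) ==> (k == x))
   (fun j k => qcat (pi j) (alpha s) (onehot R (x0 j)) k *
             qcat (pi j) (alpha t / alpha s) (onehot R k) (xt j))).
  rewrite (bigD1 l) //= eqxx /=.
  rewrite (big_pred1_eq _ x (fun k => qcat (pi l) (alpha s) (onehot R (x0 l)) k *
             qcat (pi l) (alpha t / alpha s) (onehot R k) (xt l))).
  rewrite /Pm [RHS]mulrC; congr (_ * _); apply: eq_bigr => j hj.
  have -> : \sum_(k < K | (j == l) ==> (k == x))
        qcat (pi j) (alpha s) (onehot R (x0 j)) k *
        qcat (pi j) (alpha t / alpha s) (onehot R k) (xt j) =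
      \sum_(k < K) qcat (pi j) (alpha s) (onehot R (x0 j)) k *
        qcat (pi j) (alpha t / alpha s) (onehot R k) (xt j).
    by apply: eq_bigl => k; rewrite (negbTE hj).
  by rewrite qcat_CK // hr.
rewrite -mulr_suml; congr (_ * _).
by rewrite (sum_qcat_lin (pi l) (alpha s) l x (fun x0 => p0 x0 * Pm alpha pi t l xt x0)).
Qed.


Lemma sumN (R : realType) K L (p0 : seqX K L -> R) (alpha : R -> R) (pi : 'I_L -> 'I_K -> R)
  t l xt : \sum_x Nw p0 alpha pi t l xt x = Ww p0 alpha pi t l xt.
Proof.
by rewrite /Ww (partition_big (fun x0 : seqX K L => x0 l) predT) //=.
Qed.

Lemma Pm_ge0 (R : realType) K L (alpha : R -> R) (pi : 'I_L -> 'I_K -> R) t l xt x0 :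
  (forall j, simplex (pi j)) -> 0 <= alpha t <= 1 -> 0 <= Pm alpha pi t l xt x0.
Proof.
move=> hpi ht; apply: prodr_ge0 => j _; apply: qcat_ge0 => //; exact: simplex_onehot.
Qed.

Lemma N_ge0 (R : realType) K L (p0 : seqX K L -> R) (alpha : R -> R) (pi : 'I_L -> 'I_K -> R)
  t l xt x : is_pmf p0 -> (forall j, simplex (pi j)) -> 0 <= alpha t <= 1 ->
  0 <= Nw p0 alpha pi t l xt x.
Proof.
move=> [hp _] hpi ht; apply: sumr_ge0 => x0 _; apply: mulr_ge0 => //; exact: Pm_ge0.
Qed.

Lemma N_leW (R : realType) K L (p0 : seqX K L -> R) (alpha : R -> R) (pi : 'I_L -> 'I_K -> R)
  t l xt x : is_pmf p0 -> (forall j, simplex (pi j)) -> 0 <= alpha t <= 1 ->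
  Nw p0 alpha pi t l xt x <= Ww p0 alpha pi t l xt.
Proof.
move=> [hp _] hpi ht; rewrite /Nw /Ww [X in _ <= X](bigID (fun x0 : seqX K L => x0 l == x)) /=.
rewrite lerDl; apply: sumr_ge0 => x0 _; apply: mulr_ge0 => //; exact: Pm_ge0.
Qed.

Lemma bayes (R : realType) K L (p0 : seqX K L -> R) (alpha : R -> R) (pi : 'I_L -> 'I_K -> R)
  s t l xt : is_pmf p0 -> schedule alpha -> (forall j, simplex (pi j)) ->
  0 <= s -> s < t -> t <= 1 -> 0 < marg p0 alpha pi t xt ->
  [/\ simplex (xhat p0 alpha pi xt t l),
      0 < qcat (pi l) (alpha t) (xhat p0 alpha pi xt t l) (xt l) &
      forall x, rev_tok p0 alpha pi s t l xt x =
        qcat (pi l) (alpha t / alpha s) (onehot R x) (xt l) *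
        qcat (pi l) (alpha s) (xhat p0 alpha pi xt t l) x
        / qcat (pi l) (alpha t) (xhat p0 alpha pi xt t l) (xt l)].
Proof.
move=> hp0 [a0 [hrng hmono]] hpi s0 st t1 hm.
have t0 : 0 <= t by apply: le_trans s0 (ltW st).
have ht := hrng t t0 t1.
have hs := hrng s s0 (ltW (lt_le_trans st t1)).
have hts := hmono s t s0 (ltW st) t1.
set N := Nw p0 alpha pi t l xt; set W := Ww p0 alpha pi t l xt.
have hN : forall x, 0 <= N x by move=> x; exact: N_ge0.
have hNW : forall x, N x <= W by move=> x; exact: N_leW.
have hme := marg_eq p0 pi t l xt a0.
have hpil := simplex_le1 (xt l) (hpi l).
have hpil0 : 0 <= pi l (xt l) by case: (hpi l).
have hW : 0 < W.
  move: (hNW (xt l)) (hN (xt l)) hm; rewrite hme -/N -/W => h1 h2 h3.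
  case/andP: ht => ht0 ht1.
  have : alpha t * N (xt l) <= alpha t * W by rewrite ler_wpM2l.
  have : (1 - alpha t) * pi l (xt l) * W <= (1 - alpha t) * W.
    rewrite -mulrA ler_wpM2l ?subr_ge0 //.
    have W0 : 0 <= W by apply: le_trans h2 h1.
    by rewrite -[X in _ <= X]mul1r ler_wpM2r.
  lra.
have hx : forall k, xhat p0 alpha pi xt t l k = N k / W.
  by move=> k; rewrite /xhat /loo loo_num // loo_den.
have hxs : simplex (xhat p0 alpha pi xt t l).
  split; first by move=> k; rewrite hx divr_ge0 // ltW.
  under eq_bigr do rewrite hx.
  by rewrite -mulr_suml sumN divff // gt_eqF.
have hq : qcat (pi l) (alpha t) (xhat p0 alpha pi xt t l) (xt l) = marg p0 alpha pi t xt / W.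
  rewrite hme /qcat hx -/N -/W; field; by rewrite gt_eqF.
split => //; first by rewrite hq divr_gt0.
move=> x; rewrite hq /rev_tok joint_sum // -/N -/W.
  set Q := qcat (pi l) (alpha t / alpha s) _ _; set M := marg _ _ _ _ _.
  rewrite /qcat hx; field; rewrite ?gt_eqF //.
case: (eqVneq (alpha s) 0) => h0.
  rewrite h0 mul0r; case/andP: ht => ht0 _; rewrite h0 in hts.
  by apply/eqP; rewrite eq_le ht0 hts.
by rewrite mulrCA divff // mulr1.
Qed.


Lemma ln_ineq (R : realType) (p q : R) : 0 < p -> 0 < q ->
  p - q <= p * ln (p / q) /\ (p != q -> p - q < p * ln (p / q)).
Proof.
move=> hp hq; set z := q / p.
have z0 : 0 < z by rewrite divr_gt0.
have zpos : z \in Num.pos by rewrite posrE.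
have e1 : p / q = z^-1 by rewrite /z invf_div.
have e2 : ln (p / q) = - ln z by rewrite e1 lnV.
have e3 : p - q = p * (1 - z) by rewrite /z; field; rewrite gt_eqF.
have h := expR_ge1Dx (ln z); rewrite lnK // in h.
rewrite e2 e3; split.
  by apply: ler_wpM2l; [exact: ltW | lra].
move=> hpq; rewrite ltr_pM2l //.
have hl : ln z != 0.
  apply/negP => /eqP hl; move/negP: hpq; apply; apply/eqP.
  have : z = 1 by rewrite -(lnK zpos) hl expR0.
  move=> hz; have : q = z * p by rewrite /z divfK // gt_eqF.
  by rewrite hz mul1r.
have h' := expR_gt1Dx hl; rewrite lnK // in h'; lra.
Qed.

Definition KLterm (R : realType) K (p q : 'I_K -> R) (x : 'I_K) : \bar R :=
  if p x == 0%R then 0%E else if q x == 0%R then +oo%E else (p x * ln (p x / q x))%:E.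

Lemma KLE (R : realType) K (p q : 'I_K -> R) : KL p q = (\sum_x KLterm p q x)%E.
Proof. by []. Qed.

Lemma KLterm_ge (R : realType) K (p q : 'I_K -> R) x : simplex p -> simplex q ->
  ((p x - q x)%:E <= KLterm p q x)%E.
Proof.
move=> [hp _] [hq _]; rewrite /KLterm.
case: eqP => [->|/eqP p0]; first by rewrite lee_fin sub0r oppr_le0.
case: eqP => [_|/eqP q0]; first exact: leey.
rewrite lee_fin; apply: (ln_ineq _ _).1; rewrite lt_def ?p0 ?q0 ?hp ?hq //.
Qed.

Lemma KLterm_gt (R : realType) K (p q : 'I_K -> R) x : simplex p -> simplex q ->
  p x != q x -> ((p x - q x)%:E < KLterm p q x)%E.
Proof.
move=> [hp _] [hq _] hpq; rewrite /KLterm.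
case: eqP => [e|/eqP p0].
  rewrite lte_fin e sub0r oppr_lt0 lt_def hq andbT eq_sym -e //.
case: eqP => [_|/eqP q0]; first by rewrite ltey.
rewrite lte_fin; apply: (ln_ineq _ _).2; rewrite ?lt_def ?p0 ?q0 ?hp ?hq //.
Qed.

Lemma KL_ge0 (R : realType) K (p q : 'I_K -> R) : simplex p -> simplex q -> (0 <= KL p q)%E.
Proof.
move=> hp hq; rewrite KLE.
apply: (@le_trans _ _ (\sum_x (p x - q x)%:E)%E).
  by rewrite sumEFin lee_fin sumrB hp.2 hq.2 subrr.
by apply: lee_sum => x _; exact: KLterm_ge.
Qed.

Lemma KL_eq0 (R : realType) K (p q : 'I_K -> R) : simplex p -> simplex q ->
  (KL p q <= 0)%E -> p =1 q.
Proof.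
move=> hp hq hK x; apply/eqP/negP => /negP hx.
move: hK; apply/negP; rewrite -ltNge KLE.
suff : (\sum_x (p x - q x)%:E < \sum_x KLterm p q x)%E.
  by rewrite sumEFin sumrB hp.2 hq.2 subrr.
rewrite (bigD1 x) //= [X in (_ < X)%E](bigD1 x) //=.
apply: lte_leD; first by rewrite sumEFin.
  exact: KLterm_gt.
by apply: lee_sum => y _; exact: KLterm_ge.
Qed.

Lemma KL_self (R : realType) K (p : 'I_K -> R) : KL p p = 0%E.
Proof.
rewrite KLE big1 // => x _; rewrite /KLterm; case: eqP => // /eqP h.
by rewrite divff // ln1 mulr0.
Qed.


Definition A1f (R : realType) K (pi : 'I_K -> R) (a b : R) (nu : 'I_K -> R) (k x : 'I_K) : R :=
  qcat pi (a / b) (onehot R x) k * qcat pi b nu x / qcat pi a nu k.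

Lemma CK_gen (R : realType) K (pi nu : 'I_K -> R) r b k :
  simplex pi -> simplex nu ->
  \sum_x qcat pi r (onehot R x) k * qcat pi b nu x = qcat pi (b * r) nu k.
Proof.
move=> [_ hp] [_ hn]; rewrite /qcat.
under eq_bigr => x _ do rewrite mulrDl.
rewrite big_split /=.
have -> : \sum_x r * onehot R x k * (b * nu x + (1 - b) * pi x) = r * (b * nu k + (1 - b) * pi k).
  rewrite -[RHS](sum_onehot k (fun x => r * (b * nu x + (1 - b) * pi x))).
  by apply: eq_bigr => x _; rewrite /onehot eq_sym; ring.
rewrite -mulr_sumr big_split /= -!mulr_sumr hn hp; ring.
Qed.

Lemma simplex_A1f (R : realType) K (pi nu : 'I_K -> R) a b k :
  simplex pi -> simplex nu -> 0 <= b <= 1 -> 0 <= a / b <= 1 -> b * (a / b) = a ->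
  0 < qcat pi a nu k -> simplex (A1f pi a b nu k).
Proof.
move=> hp hn hb hr hab hq; split.
  move=> x; rewrite /A1f; apply: divr_ge0; last exact: ltW.
  by apply: mulr_ge0; apply: qcat_ge0 => //; exact: simplex_onehot.
rewrite /A1f -mulr_suml CK_gen // hab divff // gt_eqF //.
Qed.

Lemma KL_ext (R : realType) K (p p' q q' : 'I_K -> R) : p =1 p' -> q =1 q' -> KL p q = KL p' q'.
Proof. by move=> hp hq; apply: eq_bigr => x _; rewrite hp hq. Qed.

Lemma simplex_ext (R : realType) K (p q : 'I_K -> R) : p =1 q -> simplex q -> simplex p.
Proof.
move=> h [h1 h2]; split; first by move=> x; rewrite h.
by rewrite -h2; apply: eq_bigr => x _; rewrite h.
Qed.

Lemma udm_A1 (R : realType) K L (alpha : R -> R) (l : 'I_L) s t (nu : 'I_K -> R) k x :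
  (1 < K)%N -> 0 < alpha s -> 0 < alpha t < 1 -> simplex nu ->
  @udm_bridge R K L alpha l s t nu k x = A1f (fun _ => K%:R^-1) (alpha t) (alpha s) nu k x.
Proof.
move=> hK hs /andP[ht0 ht1] [hn _].
have K0 : (K%:R : R) != 0 by rewrite pnatr_eq0 -lt0n ltnW.
have K0' : (0 : R) < K%:R by rewrite ltr0n ltnW.
have hnk := hn k.
have hq : 0 < alpha t * nu k + (1 - alpha t) * K%:R^-1.
  apply: ltr_pwDr; first by rewrite mulr_gt0 ?subr_gt0 ?invr_gt0.
  by rewrite mulr_ge0 // ltW.
rewrite /udm_bridge /A1f /qcat /onehot [(k == x)]eq_sym /=.
have hs0 : alpha s != 0 by rewrite gt_eqF.
have hq0 : alpha t * nu k + (1 - alpha t) / K%:R != 0 by rewrite gt_eqF.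
have hd : K%:R * alpha t * nu k + 1 - alpha t != 0.
  have -> : K%:R * alpha t * nu k + 1 - alpha t = K%:R * (alpha t * nu k + (1 - alpha t) / K%:R).
    by field.
  by rewrite mulf_neq0.
have hd2 : alpha t * nu k * K%:R + (1 - alpha t) != 0.
  have -> : alpha t * nu k * K%:R + (1 - alpha t) = K%:R * (alpha t * nu k + (1 - alpha t) / K%:R).
    by field.
  by rewrite mulf_neq0.
case: (eqVneq x k) => [->|hxk]; rewrite ?eqxx ?(negbTE hxk) /=.
  by field; rewrite K0 hd2 hs0.
by field; rewrite K0 hd2 hs0.
Qed.


Lemma eq_via (R : realType) (X Y D u : R) : X = Y -> X - Y = D * u -> D != 0 -> u = 0.
Proof.
move=> -> ; rewrite subrr => /esym /eqP; rewrite mulf_eq0 => /orP[/eqP->|/eqP //].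
by rewrite eqxx.
Qed.

Lemma udm_inj (R : realType) K L (alpha : R -> R) (l : 'I_L) s t (nu1 nu2 : 'I_K -> R) k :
  (1 < K)%N -> 0 < alpha t < 1 -> alpha t < alpha s -> alpha s <= 1 ->
  simplex nu1 -> simplex nu2 ->
  @udm_bridge R K L alpha l s t nu1 k =1 @udm_bridge R K L alpha l s t nu2 k -> nu1 =1 nu2.
Proof.
move=> hK /andP[a0 a1] hab hb1 [hn1 _] [hn2 _] h.
have b0 : 0 < alpha s by apply: lt_trans hab.
have K2 : (2 : R) <= K%:R by rewrite (ler_nat _ 2).
have K0 : (K%:R : R) != 0 by rewrite pnatr_eq0 -lt0n ltnW.
have hs0 : alpha s != 0 by rewrite gt_eqF.
have hc : forall nu : 'I_K -> R, (forall k, 0 <= nu k) -> K%:R * alpha t * nu k + 1 - alpha t != 0.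
  move=> nu hn; rewrite gt_eqF // -addrA ltr_wpDl // ?subr_gt0 //.
  by rewrite mulr_ge0 // mulr_ge0 // ltW.
have hr : alpha t / alpha s < 1 by rewrite ltr_pdivrMr // mul1r.
set Delta := alpha t * (1 - alpha t / alpha s) * (K%:R - 1 + alpha s) + (alpha s - alpha t) * (1 - alpha t).
have hD : Delta != 0.
  rewrite gt_eqF // /Delta ltr_wpDl //.
    apply: mulr_ge0; first by apply: mulr_ge0; [exact: ltW | rewrite subr_ge0 ltW].
    lra.
  by apply: mulr_gt0; rewrite subr_gt0.
have ek : nu1 k = nu2 k.
  move: (h k); rewrite /udm_bridge /= eqxx /=.
  move/eqP; rewrite eqr_div ?hc //.
  move=> /eqP e.
  have := eq_via (u := nu1 k - nu2 k) e _ hD.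
  move=> H; apply/eqP; rewrite -subr_eq0; apply/eqP; apply: H.
  by rewrite /Delta; field; rewrite hs0 K0.
move=> j; case: (eqVneq j k) => [->//|hjk].
move: (h j); rewrite /udm_bridge /= (negbTE hjk) /= ek.
move/eqP; rewrite eqr_div.
  2,3: exact: hc.
move=> /eqP e.
have hba : alpha s - alpha t != 0 by rewrite subr_eq0 gt_eqF.
have hc2 := hc nu2 hn2.
have := eq_via (D := (alpha s - alpha t) * (K%:R * alpha t * nu2 k + 1 - alpha t)) (u := nu1 j - nu2 j) e _ _.
move=> H; apply/eqP; rewrite -subr_eq0; apply/eqP; apply: H.
  by field; rewrite hs0 K0.
by rewrite mulf_neq0.
Qed.


Lemma grid_mono (R : realType) n (tg : nat -> R) : grid n tg ->
  forall i j, (i <= j <= n)%N -> tg i <= tg j.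
Proof.
move=> [_ [_ hinc]] i j /andP[]; elim: j => [|j IH] hij hjn.
  by move: hij; rewrite leqn0 => /eqP ->.
move: hij; rewrite leq_eqVlt => /orP[/eqP ->//|]; rewrite ltnS => hij.
exact: le_trans (IH hij (ltnW hjn)) (ltW (hinc j hjn)).
Qed.

Lemma grid_range (R : realType) n (tg : nat -> R) : grid n tg ->
  forall i, (i <= n)%N -> 0 <= tg i /\ tg i <= 1.
Proof.
move=> hg i hi; have [h0 [h1 _]] := hg; split.
  by rewrite -h0; apply: (grid_mono hg); rewrite leq0n hi.
by rewrite -h1; apply: (grid_mono hg); rewrite hi leqnn.
Qed.

Lemma grid_step (R : realType) n (tg : nat -> R) : grid n tg ->
  forall i, (1 <= i <= n)%N -> [/\ 0 <= tg i.-1, tg i.-1 < tg i & tg i <= 1].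
Proof.
move=> hg i /andP[i1 in_]; have [_ [_ hinc]] := hg.
have e : i.-1.+1 = i by rewrite prednK.
split.
- by have [] := grid_range hg (leq_trans (leq_pred i) in_).
- have hlt : (i.-1 < n)%N by rewrite -ltnS e ltnS.
  by have := hinc i.-1 hlt; rewrite e.
- by have [] := grid_range hg in_.
Qed.

Lemma sum_le0 (R : realType) (I : eqType) (s : seq I) (F : I -> \bar R) :
  (forall j, j \in s -> (0 <= F j)%E) -> (\sum_(j <- s) F j <= 0)%E ->
  forall j, j \in s -> (F j <= 0)%E.
Proof.
elim: s => [|a s IH] hF hs j //; rewrite big_cons in hs.
have ha : (0 <= F a)%E by apply: hF; rewrite mem_head.
have hr : (0 <= \sum_(j <- s) F j)%E.
  rewrite big_seq; apply: sume_ge0 => y hy; by apply: hF; rewrite in_cons hy orbT.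
rewrite in_cons => /orP[/eqP ->|hj].
  by apply: le_trans hs; apply: leeDl.
apply: IH => //.
  by move=> y hy; apply: hF; rewrite in_cons hy orbT.
by apply: le_trans hs; rewrite leeDr.
Qed.

Lemma marg_ge0 (R : realType) K L (p0 : seqX K L -> R) (alpha : R -> R) (pi : 'I_L -> 'I_K -> R) t xt :
  is_pmf p0 -> (forall j, simplex (pi j)) -> alpha 0 = 1 -> 0 <= alpha t <= 1 ->
  0 <= marg p0 alpha pi t xt.
Proof.
move=> [hp _] hpi a0 ht; apply: sumr_ge0 => x0 _; apply: mulr_ge0 => //.
apply: prodr_ge0 => j _; apply: qcat_ge0 => //; first exact: simplex_onehot.
by rewrite a0 divr1.
Qed.

Lemma simplex_unif (R : realType) K : (0 < K)%N -> simplex (fun _ : 'I_K => (K%:R : R)^-1).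
Proof.
move=> hK; split; first by move=> _; rewrite invr_ge0 ler0n.
by rewrite sumr_const card_ord -[_ *+ K]mulr_natl mulfV // pnatr_eq0 -lt0n.
Qed.

Lemma udm_simplex (R : realType) K L (alpha : R -> R) (l : 'I_L) s t (nu : 'I_K -> R) k :
  (1 < K)%N -> 0 < alpha s <= 1 -> 0 < alpha t < 1 -> alpha t <= alpha s -> simplex nu ->
  simplex (@udm_bridge R K L alpha l s t nu k).
Proof.
move=> hK /andP[b0 b1] /andP[a0 a1] hab hn.
apply: (@simplex_ext _ _ _ (A1f (fun _ => K%:R^-1) (alpha t) (alpha s) nu k)).
  by move=> x; apply: udm_A1 => //; rewrite a0 a1.
have [hn0 _] := hn.
apply: simplex_A1f => //.
- exact: simplex_unif (ltnW hK).
- by rewrite ltW.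
- by rewrite divr_ge0 ?(ltW a0) ?(ltW b0) //= ler_pdivrMr // mul1r.
- by rewrite mulrCA divff ?mulr1 // gt_eqF.
- rewrite /qcat; apply: ltr_wpDl; first by rewrite mulr_ge0 // ltW.
  by rewrite mulr_gt0 ?subr_gt0 // invr_gt0 ltr0n ltnW.
Qed.

Unset Implicit Arguments. Set Strict Implicit.

Theorem proposition1 (R : realType) (K L : nat) (hK : (2 <= K)%N) (hL : (1 <= L)%N)
  (p0 : seqX K L -> R) (hp0 : is_pmf p0)
  (alpha : R -> R) (halpha : schedule alpha)
  (pi : 'I_L -> 'I_K -> R) (hpi : forall l, simplex (pi l)) :
  (* (i) and (ii), for any bridge extension satisfying (A1) *)
  (forall br : bridge_type R K L, bridge_simplex br -> A1 alpha pi br ->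
     (forall s t : R, 0 <= s -> s < t -> t <= 1 ->
      forall (l : 'I_L) (xt : seqX K L), 0 < marg p0 alpha pi t xt ->
        rev_tok p0 alpha pi s t l xt =1 br l s t (xhat p0 alpha pi xt t l) (xt l))
     /\
     (forall (n : nat) (tg : nat -> R), grid n tg ->
      forall d, predictor d ->
        (Jobj p0 alpha pi br n tg (xhat p0 alpha pi) <= Jobj p0 alpha pi br n tg d)%E))
  /\
  (* (iii) uniqueness in the UDM case with the canonical extension *)
  ((forall s t, 0 <= s -> s < t -> t <= 1 -> alpha t < alpha s) ->
   (forall t, 0 < t -> t <= 1 -> 0 < alpha t < 1) ->
   (forall l k, pi l k = K%:R^-1) ->
     (forall s t : R, 0 < s -> s < t -> t <= 1 ->
      forall (l : 'I_L) (k : 'I_K) (nu1 nu2 : 'I_K -> R), simplex nu1 -> simplex nu2 ->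
        @udm_bridge R K L alpha l s t nu1 k =1 @udm_bridge R K L alpha l s t nu2 k ->
        nu1 =1 nu2)
     /\
     (forall s t : R, 0 < s -> s < t -> t <= 1 ->
      forall (l : 'I_L) (xt : seqX K L) (nu : 'I_K -> R),
        0 < marg p0 alpha pi t xt -> simplex nu ->
        @udm_bridge R K L alpha l s t nu (xt l) =1 rev_tok p0 alpha pi s t l xt ->
        nu =1 xhat p0 alpha pi xt t l)
     /\
     (forall (n : nat) (tg : nat -> R), grid n tg ->
      forall d, predictor d ->
        (Jobj p0 alpha pi (@udm_bridge R K L alpha) n tg d
           <= Jobj p0 alpha pi (@udm_bridge R K L alpha) n tg (xhat p0 alpha pi))%E ->
        forall i, (1 <= i <= n)%N -> 0 < tg i.-1 ->
        forall (x : seqX K L) (l : 'I_L), 0 < marg p0 alpha pi (tg i) x ->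
          d x (tg i) l =1 xhat p0 alpha pi x (tg i) l)).
Proof.
have [a0 [hrng hmono]] := halpha.
have hmarg : forall t xt, 0 <= t -> t <= 1 -> 0 <= marg p0 alpha pi t xt.
  by move=> t xt t0 t1; apply: marg_ge0 => //; exact: hrng.
split.
  move=> br hbr hA1.
  have parti : forall s t : R, 0 <= s -> s < t -> t <= 1 ->
      forall (l : 'I_L) (xt : seqX K L), 0 < marg p0 alpha pi t xt ->
        rev_tok p0 alpha pi s t l xt =1 br l s t (xhat p0 alpha pi xt t l) (xt l).
    move=> s t s0 st t1 l xt hm x.
    have [hxs hq hrev] := @bayes _ _ _ p0 alpha pi s t l xt hp0 halpha hpi s0 st t1 hm.
    by rewrite hrev (hA1 l s t s0 st t1 x (xt l) _ hxs hq).
  split => // n tg hg d hd.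
  rewrite /Jobj !big_seq; apply: lee_sum => i; rewrite mem_index_iota => hi.
  have [s0 st t1] := grid_step hg hi.
  have t0 : 0 <= tg i by apply: le_trans s0 (ltW st).
  apply: lee_sum => l _; apply: lee_sum => x _.
  have := hmarg (tg i) x t0 t1; rewrite le_eqVlt => /orP[/eqP <-|hm].
    by rewrite !mul0e.
  have [hxs _ _] := @bayes _ _ _ p0 alpha pi (tg i.-1) (tg i) l x hp0 halpha hpi s0 st t1 hm.
  rewrite (KL_ext (parti _ _ s0 st t1 l x hm) (frefl _)) KL_self mule0.
  apply: mule_ge0; first by rewrite lee_fin ltW.
  apply: KL_ge0.
    by apply: (simplex_ext (parti _ _ s0 st t1 l x hm)); apply: hbr.
  by apply: hbr => //; apply: hd.
move=> hstrict hrange hpiu.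
have hposa : forall s, 0 <= s -> s <= 1 -> 0 < alpha s <= 1.
  move=> s s0 s1; case: (eqVneq s 0) => [->|hs]; first by rewrite a0 ltr01 lexx.
  have : 0 < s by rewrite lt_def hs s0.
  by move=> /(hrange s)/(_ s1)/andP[h1 h2]; rewrite h1 ltW.
have udm_rev : forall s t, 0 <= s -> s < t -> t <= 1 -> forall l xt,
    0 < marg p0 alpha pi t xt ->
    rev_tok p0 alpha pi s t l xt =1 @udm_bridge R K L alpha l s t (xhat p0 alpha pi xt t l) (xt l).
  move=> s t s0 st t1 l xt hm x.
  have [hxs hq hrev] := @bayes _ _ _ p0 alpha pi s t l xt hp0 halpha hpi s0 st t1 hm.
  have t0 : 0 < t by apply: le_lt_trans s0 st.
  have [hs _] := andP (hposa s s0 (ltW (lt_le_trans st t1))).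
  rewrite hrev (@udm_A1 _ K L alpha l s t _ (xt l) x hK hs (hrange t t0 t1) hxs).
  by rewrite /A1f /qcat !hpiu.
have partb : forall s t : R, 0 <= s -> s < t -> t <= 1 ->
      forall (l : 'I_L) (xt : seqX K L) (nu : 'I_K -> R),
        0 < marg p0 alpha pi t xt -> simplex nu ->
        @udm_bridge R K L alpha l s t nu (xt l) =1 rev_tok p0 alpha pi s t l xt ->
        nu =1 xhat p0 alpha pi xt t l.
  move=> s t s0 st t1 l xt nu hm hnu heq.
  have [hxs _ _] := @bayes _ _ _ p0 alpha pi s t l xt hp0 halpha hpi s0 st t1 hm.
  have t0 : 0 < t by apply: le_lt_trans s0 st.
  have [_ hs1] := andP (hposa s s0 (ltW (lt_le_trans st t1))).
  apply: (@udm_inj _ K L alpha l s t nu _ (xt l) hK (hrange t t0 t1) (hstrict s t s0 st t1) hs1 hnu hxs).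
  by move=> y; rewrite heq udm_rev.
split.
  move=> s t s0 st t1 l k nu1 nu2 h1 h2 h.
  have t0 : 0 < t by apply: lt_trans s0 st.
  have [_ hs1] := andP (hposa s (ltW s0) (ltW (lt_le_trans st t1))).
  exact: (@udm_inj _ K L alpha l s t nu1 nu2 k hK (hrange t t0 t1) (hstrict s t (ltW s0) st t1) hs1 h1 h2 h).
split.
  move=> s t s0 st t1 l xt nu hm hnu heq; exact: (partb s t (ltW s0) st t1 l xt nu hm hnu heq).
move=> n tg hg d hd hJ i hi si x l hm.
have J0 : Jobj p0 alpha pi (@udm_bridge R K L alpha) n tg (xhat p0 alpha pi) = 0%E.
  rewrite /Jobj big_seq big1 // => j; rewrite mem_index_iota => hj.
  have [s0 st t1] := grid_step hg hj.
  have t0 : 0 <= tg j by apply: le_trans s0 (ltW st).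
  rewrite big1 // => l' _; rewrite big1 // => x' _.
  have := hmarg (tg j) x' t0 t1; rewrite le_eqVlt => /orP[/eqP <-|hm'].
    by rewrite mul0e.
  by rewrite (KL_ext (udm_rev _ _ s0 st t1 l' x' hm') (frefl _)) KL_self mule0.
rewrite J0 in hJ.
have term : forall j, (1 <= j <= n)%N -> forall (l' : 'I_L) (x' : seqX K L),
    (0 <= (marg p0 alpha pi (tg j) x')%:E *
       KL (rev_tok p0 alpha pi (tg j.-1) (tg j) l' x')
          (@udm_bridge R K L alpha l' (tg j.-1) (tg j) (d x' (tg j) l') (x' l')))%E.
  move=> j hj l' x'.
  have [s0 st t1] := grid_step hg hj.
  have t0 : 0 <= tg j by apply: le_trans s0 (ltW st).
  have t0' : 0 < tg j by apply: le_lt_trans s0 st.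
  have hsa := hposa _ s0 (ltW (lt_le_trans st t1)).
  have hta := hrange _ t0' t1.
  have hts := ltW (hstrict _ _ s0 st t1).
  have := hmarg (tg j) x' t0 t1; rewrite le_eqVlt => /orP[/eqP <-|hm'].
    by rewrite mul0e.
  have [hxs _ _] := @bayes _ _ _ p0 alpha pi (tg j.-1) (tg j) l' x' hp0 halpha hpi s0 st t1 hm'.
  apply: mule_ge0; first by rewrite lee_fin ltW.
  apply: KL_ge0.
    apply: (simplex_ext (udm_rev _ _ s0 st t1 l' x' hm')).
    exact: udm_simplex.
  by apply: udm_simplex => //; apply: hd.
have step : forall (I : finType) (G : I -> \bar R), (forall j, 0 <= G j)%E ->
    (\sum_j G j <= 0)%E -> forall j, (G j <= 0)%E.
  move=> I G hG hs j.
  by apply: (sum_le0 (s := index_enum I) (fun y _ => hG y) hs); exact: mem_index_enum.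
move: hJ; rewrite /Jobj => hJ.
have hF : forall j, j \in index_iota 1 n.+1 -> (0 <= \sum_(l' < L) \sum_(x' : seqX K L)
    ((marg p0 alpha pi (tg j) x')%:E * KL (rev_tok p0 alpha pi (tg j.-1) (tg j) l' x')
      (@udm_bridge R K L alpha l' (tg j.-1) (tg j) (d x' (tg j) l') (x' l'))))%E.
  move=> j; rewrite mem_index_iota => hj.
  by apply: sume_ge0 => l' _; apply: sume_ge0 => x' _; exact: term.
have hJi := sum_le0 hF hJ (j := i).
rewrite mem_index_iota in hJi; have {}hJi := hJi hi.
have hJl := step _ _ (fun l' => sume_ge0 (fun x' _ => term i hi l' x') _) hJi l.
have hJx := step _ _ (fun x' => term i hi l x') hJl x.
have [s0 st t1] := grid_step hg hi.
have t0' : 0 < tg i by apply: le_lt_trans s0 st.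
have hsa := hposa _ s0 (ltW (lt_le_trans st t1)).
have hta := hrange _ t0' t1.
have hts := ltW (hstrict _ _ s0 st t1).
have [hxs _ _] := @bayes _ _ _ p0 alpha pi (tg i.-1) (tg i) l x hp0 halpha hpi s0 st t1 hm.
have hdS : simplex (d x (tg i) l) by apply: hd => //; exact: ltW.
have hsr : simplex (rev_tok p0 alpha pi (tg i.-1) (tg i) l x).
  apply: (simplex_ext (udm_rev _ _ s0 st t1 l x hm)); exact: udm_simplex.
have hsu := udm_simplex l (x l) hK hsa hta hts hdS.
have hKL : (KL (rev_tok p0 alpha pi (tg i.-1) (tg i) l x)
    (@udm_bridge R K L alpha l (tg i.-1) (tg i) (d x (tg i) l) (x l)) <= 0)%E.
  rewrite leNgt; apply/negP => hp; move: hJx; rewrite leNgt mule_gt0 //.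
have heq := KL_eq0 hsr hsu hKL.
by apply: (partb _ _ s0 st t1 l x _ hm hdS) => y; rewrite heq.
Qed.
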